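(* Let $s$ be an indeterminate, and for an integer $k$ put $\{k\}_s=s^k-s^{-k}$ and $[k]_s=\{k\}_s/\{1\}_s$. For positive integers $m,n$ let $V_H(m,n)=[mn]_s$ (the colored Jones polynomial of the Hopf link $H$, normalized so that the $k$-colored unknot has value $[k]_s$). Let $E_m,E_n,Q_m,Q_n$ act on functions $f(m,n)$ by $(E_mf)(m,n)=f(m+1,n)$, $(E_nf)(m,n)=f(m,n+1)$, $(Q_mf)(m,n)=s^mf(m,n)$, $(Q_nf)(m,n)=s^nf(m,n)$, and put $a(x)=x-x^{-1}$. Define \[A_{s;m}(H)=E_m^2-(Q_n+Q_n^{-1})E_m+1,\qquad A_{s;n}(H)=E_n^2-(Q_m+Q_m^{-1})E_n+1,\] \[A^{\mathrm{bi}}_{s;mn}(H)=a(Q_m)E_m-a(Q_n)E_n+a(Q_nQ_m^{-1}).\] Then $A_{s;m}(H)V_H=0$ and $A^{\mathrm{bi}}_{s;mn}(H)V_H=0$, and in the algebra described in the context the identity \[a(Q_m)a(sQ_m)A_{s;m}(H)-a(Q_n)a(sQ_n)A_{s;n}(H)=\{a(Q_m)E_m+a(Q_n)E_n-a(sQ_mQ_n)\}\,A^{\mathrm{bi}}_{s;mn}(H)\] holds.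
   Context: The identity is in the noncommutative algebra of polynomials in $E_m,E_n$ with coefficients in $\mathbb{Q}(s,Q_m,Q_n)$ written on the left, subject to $E_mE_n=E_nE_m$, $E_m\,p(s,Q_m,Q_n)=p(s,sQ_m,Q_n)\,E_m$ and $E_n\,p(s,Q_m,Q_n)=p(s,Q_m,sQ_n)\,E_n$ for rational functions $p$ (this is the composition rule of the operators above). *)

(* Defs.v *)
From mathcomp Require Import all_boot all_order all_algebra.
Set Implicit Arguments. Unset Strict Implicit. Unset Printing Implicit Defensive.
Import GRing.Theory.
Local Open Scope ring_scope.
From mathcomp Require Import generic_quotient.

Notation "x %:F" := (@FracField.tofrac _ x) (format "x %:F") : ring_scope.

Definition Qs := {fraction {poly rat}}.
Definition sv : Qs := ('X : {poly rat})%:F.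
Definition qbrace (k : nat) : Qs := sv ^+ k - sv ^- k.
Definition qint (k : nat) : Qs := qbrace k / qbrace 1.
Definition VH (m n : nat) : Qs := qint (m * n).
Definition afun {F : fieldType} (x : F) : F := x - x^-1.

(* Coefficient field K = Q(s, Q_m, Q_n), realised as the fraction field of
   rat[s][Q_m][Q_n]: innermost variable s, then Q_m, outermost Q_n. *)
Definition P3 := {poly {poly {poly rat}}}.
Definition K := {fraction P3}.
Definition sP : P3 := (('X : {poly rat})%:P)%:P.
Definition QmP : P3 := ('X : {poly {poly rat}})%:P.
Definition QnP : P3 := 'X.
Definition sK : K := sP%:F.
Definition QmK : K := QmP%:F.
Definition QnK : K := QnP%:F.

(* substitution Q_m |-> s Q_m on polynomials *)
Definition shiftm_P (p : P3) : P3 :=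
  map_poly (fun q : {poly {poly rat}} => q \Po ((('X : {poly rat})%:P) * 'X)) p.
(* substitution Q_n |-> s Q_n on polynomials *)
Definition shiftn_P (p : P3) : P3 :=
  p \Po (((('X : {poly rat})%:P)%:P) * 'X).

Definition frac_map (f : P3 -> P3) (x : K) : K :=
  (f (\n_(repr x)))%:F / (f (\d_(repr x)))%:F.

Definition shiftm (x : K) : K := frac_map shiftm_P x.
Definition shiftn (x : K) : K := frac_map shiftn_P x.

(* Elements of the algebra: sum_{i,j} c_ij E_m^i E_n^j (coefficients on the
   left), encoded as bivariate polynomials: outer variable E_m, inner E_n;
   c_ij = (A`_i)`_j. *)
Definition OA := {poly {poly K}}.
Definition Em : OA := 'X.
Definition En : OA := ('X : {poly K})%:P.
Definition scal (c : K) : OA := (c%:P)%:P.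

(* twisted product:
   (c E_m^i E_n^j)(d E_m^k E_n^l) = c sigma_m^i sigma_n^j (d) E_m^(i+k) E_n^(j+l) *)
Definition omul (A B : OA) : OA :=
  \sum_(i < size A) \sum_(j < size A`_i) \sum_(k < size B) \sum_(l < size B`_k)
    (((A`_i`_j * iter i shiftm (iter j shiftn (B`_k`_l)))%:P
        * 'X^(j + l))%:P * 'X^(i + k)).

Definition aK (x : K) : K := x - x^-1.

Definition A_m : OA := omul Em Em - omul (scal (QnK + QnK^-1)) Em + 1.
Definition A_n : OA := omul En En - omul (scal (QmK + QmK^-1)) En + 1.
Definition A_bi : OA :=
  omul (scal (aK QmK)) Em - omul (scal (aK QnK)) En + scal (aK (QnK * QmK^-1)).

(* Main.v *)
Require Import Defs.
From mathcomp Require Import all_boot all_order all_algebra generic_quotient.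
From mathcomp Require Import ring zify.
Import GRing.Theory.
Local Open Scope ring_scope.

Lemma frac_decomp (R : idomainType) (x : {fraction R}) :
  x = (\n_(repr x))%:F / (\d_(repr x))%:F.
Proof.
have d0 := denom_ratioP (repr x).
apply: (mulIf (_ : (\d_(repr x))%:F != 0)); first by rewrite tofrac_eq0.
rewrite divfK ?tofrac_eq0 //.
rewrite -{1}[x]reprK.
unlock tofrac.
rewrite -[LHS]/(FracField.mul _ _) -FracField.pi_mul.
apply/eqmodP => /=.
rewrite FracField.equivfE /FracField.mulf /=.
rewrite !numden_Ratio ?mulr1 ?mul1r ?oner_neq0 ?mulf_neq0 //.
by rewrite mulrC.
Qed.

Lemma L_add (F : fieldType) (a b c e : F) : b != 0 -> e != 0 ->
  a / b + c / e = (a * e + c * b) / (b * e).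
Proof. by move=> hb he; field; rewrite hb he. Qed.
Lemma L_mul (F : fieldType) (a b c e : F) : a / b * (c / e) = (a * c) / (b * e).
Proof. by rewrite invfM mulrACA. Qed.
Lemma L_inv (F : fieldType) (a b : F) : (a / b)^-1 = b / a.
Proof. by rewrite invfM invrK mulrC. Qed.

Lemma cross (F : fieldType) (p q n d : F) : q != 0 -> d != 0 -> p / q = n / d -> p * d = n * q.
Proof.
move=> hq hd e; have -> : p = n / d * q by rewrite -e divfK.
by rewrite mulrAC divfK.
Qed.

Lemma cross2 (F : fieldType) (p d n q : F) : d != 0 -> q != 0 -> p * d = n * q -> n / d = p / q.
Proof.
move=> hd hq e; apply: (mulIf hd); rewrite divfK //; apply: (mulIf hq).
by rewrite mulrAC divfK // e.
Qed.

Section FM.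
Variable f : P3 -> P3.
Hypothesis finj : injective f.
Hypothesis f0 : f 0 = 0.
Hypothesis fM : {morph f : a b / a * b}.
Hypothesis fD : {morph f : a b / a + b}.
Hypothesis f1 : f 1 = 1.

Lemma fneq0 q : q != 0 -> f q != 0.
Proof. move=> q0; apply/eqP => h; rewrite -f0 in h; by move: q0; rewrite (finj _ _ h) eqxx. Qed.

Lemma frac_mapE p q : q != 0 -> frac_map f (p%:F / q%:F) = (f p)%:F / (f q)%:F.
Proof.
move=> q0; rewrite /frac_map.
set x := p%:F / q%:F.
have E := @frac_decomp _ x.
have d0 := denom_ratioP (repr x).
move: (\n_(repr x)) (\d_(repr x)) E d0 => n d E d0.
have q0' : q%:F != 0 :> K by rewrite tofrac_eq0.
have d0' : d%:F != 0 :> K by rewrite tofrac_eq0.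
have H : p * d = n * q.
  apply/eqP; rewrite -tofrac_eq !tofracM; apply/eqP.
  move: E; rewrite /x => E.
  exact: (@cross K _ _ _ _ q0' d0' E).
have fd0 : (f d)%:F != 0 :> K by rewrite tofrac_eq0 fneq0.
have fq0 : (f q)%:F != 0 :> K by rewrite tofrac_eq0 fneq0.
have H2 : (f p)%:F * (f d)%:F = (f n)%:F * (f q)%:F :> K by rewrite -!tofracM -!fM H.
exact: (@cross2 K _ _ _ _ fd0 fq0 H2).
Qed.

Lemma frac_repr (x : K) : exists a b, b != 0 /\ x = a%:F / b%:F.
Proof. by exists (\n_(repr x)), (\d_(repr x)); split; [exact: denom_ratioP | exact: frac_decomp]. Qed.

Lemma frac_mapT p : frac_map f p%:F = (f p)%:F.
Proof.
have := frac_mapE p 1 (oner_neq0 P3).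
by rewrite f1 !tofrac1 !(@divr1 K).
Qed.

Lemma frac_mapD x y : frac_map f (x + y) = frac_map f x + frac_map f y.
Proof.
have [a [b [hb ->]]] := frac_repr x; have [c [e [he ->]]] := frac_repr y.
have hb' : b%:F != 0 :> K by rewrite tofrac_eq0.
have he' : e%:F != 0 :> K by rewrite tofrac_eq0.
have fb' : (f b)%:F != 0 :> K by rewrite tofrac_eq0 fneq0.
have fe' : (f e)%:F != 0 :> K by rewrite tofrac_eq0 fneq0.
rewrite (@L_add K _ _ _ _ hb' he') -!tofracM -tofracD.
rewrite (frac_mapE _ _ (mulf_neq0 hb he)) (frac_mapE a b hb) (frac_mapE c e he).
rewrite (@L_add K _ _ _ _ fb' fe') -!tofracM -tofracD.
by rewrite fD !fM.
Qed.

Lemma frac_mapM x y : frac_map f (x * y) = frac_map f x * frac_map f y.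
Proof.
have [a [b [hb ->]]] := frac_repr x; have [c [e [he ->]]] := frac_repr y.
rewrite (@L_mul K a%:F b%:F c%:F e%:F) -!tofracM.
rewrite (frac_mapE _ _ (mulf_neq0 hb he)) (frac_mapE a b hb) (frac_mapE c e he).
by rewrite (@L_mul K (f a)%:F (f b)%:F (f c)%:F (f e)%:F) -!tofracM !fM.
Qed.

Lemma frac_mapV x : frac_map f (x^-1) = (frac_map f x)^-1.
Proof.
have [a [b [hb ->]]] := frac_repr x.
have [->|ha] := eqVneq a 0.
  by rewrite tofrac0 (@mul0r K) (@invr0 K) -tofrac0 frac_mapT f0 tofrac0 (@invr0 K).
rewrite (@L_inv K a%:F b%:F) (frac_mapE _ _ ha) (frac_mapE _ _ hb).
by rewrite (@L_inv K (f a)%:F (f b)%:F).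
Qed.

Lemma frac_map0 : frac_map f 0 = 0.
Proof. by rewrite -tofrac0 frac_mapT f0 tofrac0. Qed.

Lemma frac_mapN x : frac_map f (- x) = - frac_map f x.
Proof.
apply/eqP; rewrite -(@subr_eq0 K) (@opprK K) -frac_mapD (@addNr K) frac_map0 //.
Qed.
End FM.


Lemma inj_of_add (R S : zmodType) (f : {additive R -> S}) :
  (forall x, f x = 0 -> x = 0) -> injective f.
Proof. move=> H a b e; apply/eqP; rewrite -subr_eq0; apply/eqP/H; by rewrite raddfB e subrr. Qed.

Definition rn : P3 := sP * 'X.
Lemma shiftnE p : shiftn_P p = comp_poly rn p.
Proof. by []. Qed.
Lemma size_rn : size rn = 2%N.
Proof.
rewrite /rn /sP mul_polyC size_scale ?size_polyX // polyC_eq0 polyX_eq0 //.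
Qed.
Lemma shiftn_inj : injective shiftn_P.
Proof.
move=> a b; rewrite !shiftnE; apply: (@inj_of_add _ _ (comp_poly rn)).
by move=> x /eqP; rewrite comp_poly2_eq0 ?size_rn // => /eqP.
Qed.

Definition rm : {poly {poly rat}} := ('X : {poly rat})%:P * 'X.
Lemma shiftmE p : shiftm_P p = map_poly (comp_poly rm) p.
Proof. by []. Qed.
Lemma size_rm : size rm = 2%N.
Proof.
rewrite /rm mul_polyC size_scale ?size_polyX // polyX_eq0 //.
Qed.
Lemma shiftm_inj : injective shiftm_P.
Proof.
move=> a b; rewrite !shiftmE; apply: map_inj_poly; last by rewrite rmorph0.
apply: (@inj_of_add _ _ (comp_poly rm)).
by move=> x /eqP; rewrite comp_poly2_eq0 ?size_rm // => /eqP.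
Qed.
Lemma shiftm0 : shiftm_P 0 = 0. Proof. by rewrite shiftmE rmorph0. Qed.
Lemma shiftn0 : shiftn_P 0 = 0. Proof. by rewrite shiftnE rmorph0. Qed.
Lemma shiftmM : {morph shiftm_P : a b / a * b}. Proof. by move=> a b; rewrite !shiftmE rmorphM. Qed.
Lemma shiftnM : {morph shiftn_P : a b / a * b}. Proof. by move=> a b; rewrite !shiftnE rmorphM. Qed.
Lemma shiftmD : {morph shiftm_P : a b / a + b}. Proof. by move=> a b; rewrite !shiftmE rmorphD. Qed.
Lemma shiftnD : {morph shiftn_P : a b / a + b}. Proof. by move=> a b; rewrite !shiftnE rmorphD. Qed.
Lemma shiftmB : {morph shiftm_P : a b / a - b}. Proof. by move=> a b; rewrite !shiftmE rmorphB. Qed.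
Lemma shiftnB : {morph shiftn_P : a b / a - b}. Proof. by move=> a b; rewrite !shiftnE rmorphB. Qed.
Lemma shiftm1 : shiftm_P 1 = 1. Proof. by rewrite shiftmE rmorph1. Qed.
Lemma shiftn1 : shiftn_P 1 = 1. Proof. by rewrite shiftnE rmorph1. Qed.
Lemma shiftm_s : shiftm_P sP = sP.
Proof. by rewrite shiftmE /sP map_polyC /= comp_polyC. Qed.
Lemma shiftm_m : shiftm_P QmP = sP * QmP.
Proof. by rewrite shiftmE /QmP map_polyC /= comp_polyX /rm /sP polyCM. Qed.
Lemma shiftm_n : shiftm_P QnP = QnP.
Proof. by rewrite shiftmE /QnP map_polyX. Qed.
Lemma shiftn_s : shiftn_P sP = sP.
Proof. by rewrite shiftnE /sP comp_polyC. Qed.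
Lemma shiftn_m : shiftn_P QmP = QmP.
Proof. by rewrite shiftnE /QmP comp_polyC. Qed.
Lemma shiftn_n : shiftn_P QnP = sP * QnP.
Proof. by rewrite shiftnE /QnP comp_polyX. Qed.

Ltac discharge_m := by [exact: shiftm_inj | exact: shiftm0 | exact: shiftmM | exact: shiftmD | exact: shiftm1].
Ltac discharge_n := by [exact: shiftn_inj | exact: shiftn0 | exact: shiftnM | exact: shiftnD | exact: shiftn1].

Lemma smD x y : shiftm (x + y) = shiftm x + shiftm y.
Proof. exact: (frac_mapD shiftm_P shiftm_inj shiftm0 shiftmM shiftmD). Qed.
Lemma snD x y : shiftn (x + y) = shiftn x + shiftn y.
Proof. exact: (frac_mapD shiftn_P shiftn_inj shiftn0 shiftnM shiftnD). Qed.
Lemma smN x : shiftm (- x) = - shiftm x.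
Proof. exact: (frac_mapN shiftm_P shiftm_inj shiftm0 shiftmM shiftmD shiftm1). Qed.
Lemma snN x : shiftn (- x) = - shiftn x.
Proof. exact: (frac_mapN shiftn_P shiftn_inj shiftn0 shiftnM shiftnD shiftn1). Qed.
Lemma sm0 : shiftm 0 = 0.
Proof. exact: (frac_map0 shiftm_P shiftm_inj shiftm0 shiftmM shiftm1). Qed.
Lemma sn0 : shiftn 0 = 0.
Proof. exact: (frac_map0 shiftn_P shiftn_inj shiftn0 shiftnM shiftn1). Qed.
Lemma smM x y : shiftm (x * y) = shiftm x * shiftm y.
Proof. exact: (frac_mapM shiftm_P shiftm_inj shiftm0 shiftmM). Qed.
Lemma snM x y : shiftn (x * y) = shiftn x * shiftn y.
Proof. exact: (frac_mapM shiftn_P shiftn_inj shiftn0 shiftnM). Qed.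
Lemma smV x : shiftm (x^-1) = (shiftm x)^-1.
Proof. exact: (frac_mapV shiftm_P shiftm_inj shiftm0 shiftmM shiftm1). Qed.
Lemma snV x : shiftn (x^-1) = (shiftn x)^-1.
Proof. exact: (frac_mapV shiftn_P shiftn_inj shiftn0 shiftnM shiftn1). Qed.
Lemma smT p : shiftm p%:F = (shiftm_P p)%:F.
Proof. exact: (frac_mapT shiftm_P shiftm_inj shiftm0 shiftmM shiftm1). Qed.
Lemma snT p : shiftn p%:F = (shiftn_P p)%:F.
Proof. exact: (frac_mapT shiftn_P shiftn_inj shiftn0 shiftnM shiftn1). Qed.
Lemma sm1 : shiftm 1 = 1.
Proof. by rewrite -tofrac1 smT shiftm1. Qed.
Lemma sn1 : shiftn 1 = 1.
Proof. by rewrite -tofrac1 snT shiftn1. Qed.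
Lemma sm_s : shiftm sK = sK. Proof. by rewrite /sK smT shiftm_s. Qed.
Lemma sm_m : shiftm QmK = sK * QmK. Proof. by rewrite /QmK smT shiftm_m tofracM. Qed.
Lemma sm_n : shiftm QnK = QnK. Proof. by rewrite /QnK smT shiftm_n. Qed.
Lemma sn_s : shiftn sK = sK. Proof. by rewrite /sK snT shiftn_s. Qed.
Lemma sn_m : shiftn QmK = QmK. Proof. by rewrite /QmK snT shiftn_m. Qed.
Lemma sn_n : shiftn QnK = sK * QnK. Proof. by rewrite /QnK snT shiftn_n tofracM. Qed.

Lemma sig0 i j : iter i shiftm (iter j shiftn (0:K)) = 0.
Proof.
have -> : iter j shiftn (0:K) = 0 by elim: j => //= j ->; rewrite sn0.
by elim: i => //= i ->; rewrite sm0.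
Qed.
Lemma sigD i j (x y : K) : iter i shiftm (iter j shiftn (x + y)) =
  iter i shiftm (iter j shiftn x) + iter i shiftm (iter j shiftn y).
Proof.
have -> : iter j shiftn (x + y) = iter j shiftn x + iter j shiftn y.
  by elim: j => //= j ->; rewrite snD.
by elim: i => //= i ->; rewrite smD.
Qed.
Lemma sigN i j (x : K) : iter i shiftm (iter j shiftn (- x)) =
  - iter i shiftm (iter j shiftn x).
Proof.
have -> : iter j shiftn (- x) = - iter j shiftn x.
  by elim: j => //= j ->; rewrite snN.
by elim: i => //= i ->; rewrite smN.
Qed.


Lemma sum_widen (V : nmodType) n N (G : 'I_n -> V) (H : 'I_N -> V) (le : (n <= N)%N) :
  (forall i : 'I_n, G i = H (widen_ord le i)) ->
  (forall i : 'I_N, (n <= i)%N -> H i = 0) -> \sum_(i < n) G i = \sum_(i < N) H i.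
Proof.
move=> e z; rewrite [RHS](bigID (fun i : 'I_N => (i < n)%N)) /= [X in _ + X]big1 ?addr0; last first.
  by move=> i; rewrite -leqNgt => /z.
by rewrite (big_ord_narrow le); apply: eq_bigr => i _; exact: e.
Qed.

Lemma sum_single (V : nmodType) N (H : 'I_N -> V) i (lt : (i < N)%N) :
  (forall p : 'I_N, (p : nat) != i -> H p = 0) -> \sum_(p < N) H p = H (Ordinal lt).
Proof.
move=> z; rewrite (bigD1 (Ordinal lt)) //= big1 ?addr0 // => p hp.
Qed.
Arguments sum_widen {V n N G H}.
Arguments sum_single {V N H i}.
Definition bnd N (A : OA) := leq (size A) N /\ forall i, leq (size A`_i) N.

Definition omulN N (A B : OA) : OA :=
  \sum_(i < N) \sum_(j < N) \sum_(k < N) \sum_(l < N)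
    (((A`_i`_j * iter i shiftm (iter j shiftn (B`_k`_l)))%:P
        * 'X^(j + l))%:P * 'X^(i + k)).

Section S.
Hypothesis sig0 : forall i j, iter i shiftm (iter j shiftn (0:K)) = 0.
Hypothesis sigD : forall i j (x y : K), iter i shiftm (iter j shiftn (x + y)) =
  iter i shiftm (iter j shiftn x) + iter i shiftm (iter j shiftn y).
Hypothesis sigN : forall i j (x : K), iter i shiftm (iter j shiftn (- x)) =
  - iter i shiftm (iter j shiftn x).

Lemma omulE N A B : bnd N A -> bnd N B -> omul A B = omulN N A B.
Proof.
move=> [sA hA] [sB hB]; rewrite /omul /omulN.
apply: (sum_widen sA) => [i|i hi]; last first.
  rewrite big1 // => j _; rewrite big1 // => k _; rewrite big1 // => l _.
  by rewrite (nth_default _ hi) coef0 (@mul0r K) (@polyC0 K) (@mul0r {poly K}) (@polyC0 {poly K}) (@mul0r OA).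
apply: (sum_widen (hA i)) => [j|j hj]; last first.
  rewrite big1 // => k _; rewrite big1 // => l _.
  by rewrite (nth_default _ hj) (@mul0r K) (@polyC0 K) (@mul0r {poly K}) (@polyC0 {poly K}) (@mul0r OA).
apply: (sum_widen sB) => [k|k hk]; last first.
  by rewrite big1 // => l _; rewrite (nth_default _ hk) coef0 sig0 (@mulr0 K) (@polyC0 K) (@mul0r {poly K}) (@polyC0 {poly K}) (@mul0r OA).
apply: (sum_widen (hB k)) => [l|l hl] //.
by rewrite (nth_default _ hl) sig0 (@mulr0 K) (@polyC0 K) (@mul0r {poly K}) (@polyC0 {poly K}) (@mul0r OA).
Qed.

Lemma omulN_addl N A B C : omulN N (A + B) C = omulN N A C + omulN N B C.
Proof.
rewrite /omulN -big_split; apply: eq_bigr => i _; rewrite -big_split; apply: eq_bigr => j _.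
rewrite -big_split; apply: eq_bigr => k _; rewrite -big_split; apply: eq_bigr => l _ /=.
by rewrite (@coefD {poly K}) (@coefD K) (@mulrDl K) (@polyCD K) (@mulrDl {poly K}) (@polyCD {poly K}) (@mulrDl OA).
Qed.

Lemma omulN_oppl N A C : omulN N (- A) C = - omulN N A C.
Proof.
rewrite /omulN -sumrN; apply: eq_bigr => i _; rewrite -sumrN; apply: eq_bigr => j _.
rewrite -sumrN; apply: eq_bigr => k _; rewrite -sumrN; apply: eq_bigr => l _ /=.
by rewrite (@coefN {poly K}) (@coefN K) (@mulNr K) (@polyCN K) (@mulNr {poly K}) (@polyCN {poly K}) (@mulNr OA).
Qed.

Lemma omulN_addr N A B C : omulN N A (B + C) = omulN N A B + omulN N A C.
Proof.
rewrite /omulN -big_split; apply: eq_bigr => i _; rewrite -big_split; apply: eq_bigr => j _.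
rewrite -big_split; apply: eq_bigr => k _; rewrite -big_split; apply: eq_bigr => l _ /=.
by rewrite (@coefD {poly K}) (@coefD K) sigD (@mulrDr K) (@polyCD K) (@mulrDl {poly K}) (@polyCD {poly K}) (@mulrDl OA).
Qed.

Lemma omulN_oppr N A C : omulN N A (- C) = - omulN N A C.
Proof.
rewrite /omulN -sumrN; apply: eq_bigr => i _; rewrite -sumrN; apply: eq_bigr => j _.
rewrite -sumrN; apply: eq_bigr => k _; rewrite -sumrN; apply: eq_bigr => l _ /=.
by rewrite (@coefN {poly K}) (@coefN K) sigN (@mulrN K) (@polyCN K) (@mulNr {poly K}) (@polyCN {poly K}) (@mulNr OA).
Qed.

Definition mon_def (c : K) (i j : nat) : OA := (c%:P * 'X^j)%:P * 'X^i.
Fact mon_key : unit. Proof. exact: tt. Qed.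
Definition mon := locked_with mon_key mon_def.
Lemma monE : mon = mon_def. Proof. exact: unlock. Qed.

Lemma coef_mon1 c i j p : (mon c i j)`_p = if p == i then c%:P * 'X^j else 0.
Proof.
rewrite monE /mon_def (@coefCM {poly K}) (@coefXn {poly K}).
rewrite (@mulr_natr {poly K}); case: eqP => _ /=.
  by rewrite (@mulr1n {poly K}).
by rewrite (@mulr0n {poly K}).
Qed.

Lemma coef_mon c i j p q : (mon c i j)`_p`_q = if (p == i) && (q == j) then c else 0.
Proof.
rewrite coef_mon1; case: (p == i) => /=; last by rewrite (@coef0 K).
rewrite (@coefCM K) (@coefXn K).
rewrite (@mulr_natr K); case: eqP => _ /=.
  by rewrite (@mulr1n K).
by rewrite (@mulr0n K).
Qed.

Lemma omulN_mon N c d i j k l : (i < N)%N -> (j < N)%N -> (k < N)%N -> (l < N)%N ->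
  omulN N (mon c i j) (mon d k l) = mon (c * iter i shiftm (iter j shiftn d)) (i + k) (j + l).
Proof.
move=> hi hj hk hl; rewrite /omulN.
rewrite (sum_single hi) => [|p hp]; last first.
  rewrite big1 // => j' _; rewrite big1 // => k' _; rewrite big1 // => l' _.
  by rewrite !coef_mon (negbTE hp) /= (@mul0r K) (@polyC0 K) (@mul0r {poly K}) (@polyC0 {poly K}) (@mul0r OA).
rewrite (sum_single hj) => [|p hp]; last first.
  rewrite big1 // => k' _; rewrite big1 // => l' _.
  by rewrite !coef_mon (negbTE hp) andbF /= (@mul0r K) (@polyC0 K) (@mul0r {poly K}) (@polyC0 {poly K}) (@mul0r OA).
rewrite (sum_single hk) => [|p hp]; last first.
  rewrite big1 // => l' _.
  by rewrite !coef_mon (negbTE hp) /= sig0 (@mulr0 K) (@polyC0 K) (@mul0r {poly K}) (@polyC0 {poly K}) (@mul0r OA).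
rewrite (sum_single hl) => [|p hp]; last first.
  by rewrite !coef_mon (negbTE hp) andbF /= sig0 (@mulr0 K) (@polyC0 K) (@mul0r {poly K}) (@polyC0 {poly K}) (@mul0r OA).
by rewrite /= !coef_mon !eqxx monE.
Qed.

Lemma bnd_mono N M A : (N <= M)%N -> bnd N A -> bnd M A.
Proof. by move=> le [h1 h2]; split=> [|i]; [exact: leq_trans le | exact: leq_trans (h2 i) le]. Qed.

Lemma bndD N A B : bnd N A -> bnd N B -> bnd N (A + B).
Proof.
move=> [a1 a2] [b1 b2]; split=> [|i].
  by apply: leq_trans (@size_polyD {poly K} A B) _; rewrite geq_max a1 b1.
rewrite (@coefD {poly K}).
by apply: leq_trans (@size_polyD K _ _) _; rewrite geq_max a2 b2.
Qed.

Lemma bndN N A : bnd N A -> bnd N (- A).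
Proof.
move=> [a1 a2]; split=> [|i]; first by rewrite (@size_polyN {poly K}).
by rewrite (@coefN {poly K}) (@size_polyN K).
Qed.

Lemma bnd_mon c i j : bnd (maxn i j).+1 (mon c i j).
Proof.
split=> [|p].
  rewrite monE /mon_def (@mul_polyC {poly K}).
  apply: leq_trans (@size_scale_leq {poly K} _ _) _.
  by rewrite (@size_polyXn {poly K}) ltnS leq_maxl.
rewrite coef_mon1; case: (p == i); last by rewrite (@size_poly0 K).
rewrite (@mul_polyC K).
apply: leq_trans (@size_scale_leq K _ _) _.
by rewrite (@size_polyXn K) ltnS leq_maxr.
Qed.

Definition bd (A : OA) := maxn (size A) (\max_(i < size A) size (nth (0%R : {poly K}) A i)).

Lemma bnd_bd A : bnd (bd A) A.
Proof.
split=> [|i]; first exact: leq_maxl.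
case: (ltnP i (size A)) => hi.
  apply: leq_trans (leq_maxr _ _).
  have := @leq_bigmax _ (fun k : 'I_(size A) => size (nth (0%R : {poly K}) A k)) (Ordinal hi); exact.
by rewrite (nth_default _ hi) (@size_poly0 K).
Qed.

Lemma omul_addl A B C : omul (A + B) C = omul A C + omul B C.
Proof.
pose N := (bd A + bd B + bd C)%N.
have hA : bnd N A by apply: bnd_mono (bnd_bd A); rewrite /N; lia.
have hB : bnd N B by apply: bnd_mono (bnd_bd B); rewrite /N; lia.
have hC : bnd N C by apply: bnd_mono (bnd_bd C); rewrite /N; lia.
rewrite !(omulE N) ?omulN_addl //; exact: bndD.
Qed.

Lemma omul_oppl A C : omul (- A) C = - omul A C.
Proof.
pose N := (bd A + bd C)%N.
have hA : bnd N A by apply: bnd_mono (bnd_bd A); rewrite /N; lia.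
have hC : bnd N C by apply: bnd_mono (bnd_bd C); rewrite /N; lia.
rewrite !(omulE N) ?omulN_oppl //; exact: bndN.
Qed.

Lemma omul_addr A B C : omul A (B + C) = omul A B + omul A C.
Proof.
pose N := (bd A + bd B + bd C)%N.
have hA : bnd N A by apply: bnd_mono (bnd_bd A); rewrite /N; lia.
have hB : bnd N B by apply: bnd_mono (bnd_bd B); rewrite /N; lia.
have hC : bnd N C by apply: bnd_mono (bnd_bd C); rewrite /N; lia.
rewrite !(omulE N) ?omulN_addr //; exact: bndD.
Qed.

Lemma omul_oppr A C : omul A (- C) = - omul A C.
Proof.
pose N := (bd A + bd C)%N.
have hA : bnd N A by apply: bnd_mono (bnd_bd A); rewrite /N; lia.
have hC : bnd N C by apply: bnd_mono (bnd_bd C); rewrite /N; lia.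
rewrite !(omulE N) ?omulN_oppr //; exact: bndN.
Qed.

Lemma omul_mon c d i j k l :
  omul (mon c i j) (mon d k l) = mon (c * iter i shiftm (iter j shiftn d)) (i + k) (j + l).
Proof.
pose N := (maxn i j).+1 + (maxn k l).+1.
rewrite (omulE N); first (rewrite omulN_mon // /N; lia).
  by apply: bnd_mono (bnd_mon _ _ _); rewrite /N; lia.
by apply: bnd_mono (bnd_mon _ _ _); rewrite /N; lia.
Qed.
End S.

Lemma omulDl A B C : omul (A + B) C = omul A C + omul B C.
Proof. apply: omul_addl; by [apply: sig0 | apply: sigD | apply: sigN]. Qed.
Lemma omulDr A B C : omul A (B + C) = omul A B + omul A C.
Proof. apply: omul_addr; by [apply: sig0 | apply: sigD | apply: sigN]. Qed.
Lemma omulNl A C : omul (- A) C = - omul A C.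
Proof. apply: omul_oppl; by [apply: sig0 | apply: sigD | apply: sigN]. Qed.
Lemma omulNr A C : omul A (- C) = - omul A C.
Proof. apply: omul_oppr; by [apply: sig0 | apply: sigD | apply: sigN]. Qed.
Lemma omulM c d i j k l :
  omul (mon c i j) (mon d k l) = mon (c * iter i shiftm (iter j shiftn d)) (i + k) (j + l).
Proof. apply: omul_mon; by [apply: sig0 | apply: sigD | apply: sigN]. Qed.

Lemma Em_mon : Em = mon 1 1 0.
Proof. by rewrite /Em monE /mon_def (@expr0 {poly K}) (@expr1 OA) (@mulr1 {poly K}) (@polyC1 K) (@polyC1 {poly K}) (@mul1r OA). Qed.
Lemma En_mon : En = mon 1 0 1.
Proof. by rewrite /En monE /mon_def (@expr1 {poly K}) (@expr0 OA) (@mulr1 OA) (@polyC1 K) (@mul1r {poly K}). Qed.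
Lemma scal_mon c : scal c = mon c 0 0.
Proof. by rewrite /scal monE /mon_def (@expr0 {poly K}) (@expr0 OA) (@mulr1 OA) (@mulr1 {poly K}). Qed.
Lemma one_mon : 1 = mon 1 0 0.
Proof. by rewrite -scal_mon /scal (@polyC1 K) (@polyC1 {poly K}). Qed.
Lemma iter0 (T : Type) (f : T -> T) x : iter 0 f x = x. Proof. by []. Qed.
Lemma iter1 (T : Type) (f : T -> T) x : iter 1 f x = f x. Proof. by []. Qed.

Lemma L1 (F : fieldType) (x y z : F) (hx : x != 0) (hy : y != 0) (hz : z != 0) : 0 - 0 + (x - x^-1) * (z * x - (z * x)^-1) * 1 - (0 - 0 + (y - y^-1) * (z * y - (z * y)^-1) * 1) = 0 - 0 + 0 + (0 - 0 + 0) + (- 0 - - 0 - (z * x * y - (z * x * y)^-1) * (y / x - (y / x)^-1)).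
Proof. field; rewrite ?hx ?hy ?hz ?mulf_neq0 //. Qed.
Lemma L2 (F : fieldType) (x y z : F) (hx : x != 0) (hy : y != 0) (hz : z != 0) : 0 - 0 + 0 - (0 - (y - y^-1) * (z * y - (z * y)^-1) * ((x + x^-1) * 1) + 0) = 0 - 0 + 0 + (0 - 0 + (y - y^-1) * 1 * (z * y / x - (z * y / x)^-1)) + (- 0 - - ((z * x * y - (z * x * y)^-1) * ((y - y^-1) * 1)) - 0).
Proof. field; rewrite ?hx ?hy ?hz ?mulf_neq0 //. Qed.
Lemma L3 (F : fieldType) (x y z : F) (hx : x != 0) (hy : y != 0) (hz : z != 0) : 0 - 0 + 0 - ((y - y^-1) * (z * y - (z * y)^-1) * (1 * 1) - 0 + 0) = 0 - 0 + 0 + (0 - (y - y^-1) * 1 * ((z * y - (z * y)^-1) * 1) + 0) + (- 0 - - 0 - 0).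
Proof. ring. Qed.
Lemma L4 (F : fieldType) (x y z : F) (hx : x != 0) (hy : y != 0) (hz : z != 0) : 0 - 0 + 0 - (0 - 0 + 0) = 0 - 0 + 0 + (0 - 0 + 0) + (- 0 - - 0 - 0) :> F.
Proof. ring. Qed.
Lemma L5 (F : fieldType) (x y z : F) (hx : x != 0) (hy : y != 0) (hz : z != 0) : 0 - (x - x^-1) * (z * x - (z * x)^-1) * ((y + y^-1) * 1) + 0 - (0 - 0 + 0) = 0 - 0 + (x - x^-1) * 1 * (y / (z * x) - (y / (z * x))^-1) + (0 - 0 + 0) + (- ((z * x * y - (z * x * y)^-1) * ((x - x^-1) * 1)) - - 0 - 0).
Proof. field; rewrite ?hx ?hy ?hz ?mulf_neq0 //. Qed.
Lemma L6 (F : fieldType) (x y z : F) (hx : x != 0) (hy : y != 0) (hz : z != 0) : 0 - 0 + 0 - (0 - 0 + 0) = 0 - (x - x^-1) * 1 * ((y - y^-1) * 1) + 0 + ((y - y^-1) * 1 * ((x - x^-1) * 1) - 0 + 0) + (- 0 - - 0 - 0).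
Proof. ring. Qed.
Lemma L9 (F : fieldType) (x y z : F) (hx : x != 0) (hy : y != 0) (hz : z != 0) : (x - x^-1) * (z * x - (z * x)^-1) * (1 * 1) - 0 + 0 - (0 - 0 + 0) = (x - x^-1) * 1 * ((z * x - (z * x)^-1) * 1) - 0 + 0 + (0 - 0 + 0) + (- 0 - - 0 - 0).
Proof. ring. Qed.

Lemma part3 : omul (scal (aK QmK * aK (sK * QmK))) A_m
    - omul (scal (aK QnK * aK (sK * QnK))) A_n
  = omul (omul (scal (aK QmK)) Em + omul (scal (aK QnK)) En
            - scal (aK (sK * QmK * QnK)))
         A_bi.
Proof.
rewrite /A_m /A_n /A_bi.
rewrite one_mon.
rewrite Em_mon En_mon !scal_mon.
rewrite !(omulDl, omulDr, omulNl, omulNr, omulM).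
rewrite !iter0 !iter1.
rewrite /aK.
rewrite !(smD, smN, smM, smV, sm1, sm_m, sm_n, sm_s).
rewrite !(snD, snN, snM, snV, sn1, sn_m, sn_n, sn_s).
apply/polyP => p; apply/polyP => q.
rewrite !((@coefD {poly K}), (@coefN {poly K})) !((@coefD K), (@coefN K)) !coef_mon.
have hm : QmK != 0 by rewrite /QmK tofrac_eq0 /QmP polyC_eq0 polyX_eq0.
have hn : QnK != 0 by rewrite /QnK tofrac_eq0 /QnP polyX_eq0.
have hs : sK != 0 by rewrite /sK tofrac_eq0 /sP !polyC_eq0 polyX_eq0.
case: p => [|[|[|p]]]; case: q => [|[|[|q]]] => /=;
 [ exact: (@L1 K QmK QnK sK hm hn hs) | exact: (@L2 K QmK QnK sK hm hn hs)
 | exact: (@L3 K QmK QnK sK hm hn hs) | exact: (@L4 K QmK QnK sK hm hn hs)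
 | exact: (@L5 K QmK QnK sK hm hn hs) | exact: (@L6 K QmK QnK sK hm hn hs)
 | exact: (@L4 K QmK QnK sK hm hn hs) | exact: (@L4 K QmK QnK sK hm hn hs)
 | exact: (@L9 K QmK QnK sK hm hn hs) | exact: (@L4 K QmK QnK sK hm hn hs)
 | exact: (@L4 K QmK QnK sK hm hn hs) | exact: (@L4 K QmK QnK sK hm hn hs)
 | exact: (@L4 K QmK QnK sK hm hn hs) | exact: (@L4 K QmK QnK sK hm hn hs)
 | exact: (@L4 K QmK QnK sK hm hn hs) | exact: (@L4 K QmK QnK sK hm hn hs) ].
Qed.

Lemma P1 (F : fieldType) (s : F) (m n : nat) : s != 0 -> s ^+ 1 - s ^- 1 != 0 ->
  (s ^+ (m.+2 * n) - s ^- (m.+2 * n)) / (s ^+ 1 - s ^- 1)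
  - (s ^+ n + s ^- n) * ((s ^+ (m.+1 * n) - s ^- (m.+1 * n)) / (s ^+ 1 - s ^- 1))
  + (s ^+ (m * n) - s ^- (m * n)) / (s ^+ 1 - s ^- 1) = 0.
Proof.
move=> hs hq; rewrite !mulSn !exprD.
have hX : s ^+ n != 0 by rewrite expf_neq0.
have hY : s ^+ (m * n) != 0 by rewrite expf_neq0.
move: hq hX hY; set q := s ^+ 1 - s ^- 1; set X := s ^+ n; set Y := s ^+ (m * n) => hq hX hY.
by field; rewrite hq hX hY.
Qed.
Lemma P2 (F : fieldType) (s : F) (m n : nat) : s != 0 -> s ^+ 1 - s ^- 1 != 0 ->
  (s ^+ m - (s ^+ m)^-1) * ((s ^+ (m.+1 * n) - s ^- (m.+1 * n)) / (s ^+ 1 - s ^- 1))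
  - (s ^+ n - (s ^+ n)^-1) * ((s ^+ (m * n.+1) - s ^- (m * n.+1)) / (s ^+ 1 - s ^- 1))
  + (s ^+ n * (s ^+ m)^-1 - (s ^+ n * (s ^+ m)^-1)^-1) * ((s ^+ (m * n) - s ^- (m * n)) / (s ^+ 1 - s ^- 1)) = 0.
Proof.
move=> hs hq; rewrite mulSn mulnS !exprD.
have hX : s ^+ n != 0 by rewrite expf_neq0.
have hZ : s ^+ m != 0 by rewrite expf_neq0.
have hY : s ^+ (m * n) != 0 by rewrite expf_neq0.
move: hq hX hY hZ; set q := s ^+ 1 - s ^- 1; set X := s ^+ n; set Y := s ^+ (m * n); set Z := s ^+ m => hq hX hY hZ.
by field; rewrite hq hX hY hZ.
Qed.

Lemma qnz (F : fieldType) (s : F) : s != 0 -> s * s - 1 != 0 -> s ^+ 1 - s ^- 1 != 0.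
Proof.
move=> hs h; rewrite (_ : s ^+ 1 - s ^- 1 = (s * s - 1) / s); first by rewrite mulf_neq0 ?invr_neq0.
by field.
Qed.

Theorem mainTheorem1 :
  (* A_{s;m}(H) V_H = 0, written out at every (m,n) with m,n positive *)
  (forall m n : nat, (0 < m)%N -> (0 < n)%N ->
     VH m.+2 n - (sv ^+ n + sv ^- n) * VH m.+1 n + VH m n = 0) /\
  (* A^bi_{s;mn}(H) V_H = 0, written out *)
  (forall m n : nat, (0 < m)%N -> (0 < n)%N ->
     afun (sv ^+ m) * VH m.+1 n - afun (sv ^+ n) * VH m n.+1
       + afun (sv ^+ n * (sv ^+ m)^-1) * VH m n = 0) /\
  (* the identity in the algebra *)
  omul (scal (aK QmK * aK (sK * QmK))) A_m
    - omul (scal (aK QnK * aK (sK * QnK))) A_n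
  = omul (omul (scal (aK QmK)) Em + omul (scal (aK QnK)) En
            - scal (aK (sK * QmK * QnK)))
         A_bi.
Proof.
have hs : sv != 0 by rewrite /sv tofrac_eq0 polyX_eq0.
have hp : ('X * 'X - 1 : {poly rat}) != 0.
  have : ('X * 'X - 1 : {poly rat}).[0] != 0 by rewrite !hornerE.
  by apply: contra => /eqP ->; rewrite horner0.
have e : ('X * 'X - 1 : {poly rat})%:F = sv * sv - 1 by rewrite tofracB tofracM tofrac1.
have hq : sv ^+ 1 - sv ^- 1 != 0.
  apply: (@qnz _ _ hs); rewrite -e tofrac_eq0; exact: hp.
split; first by move=> m n _ _; rewrite /VH /qint /qbrace; exact: (@P1 Qs sv m n hs hq).
split; first by move=> m n _ _; rewrite /VH /qint /qbrace /afun; exact: (@P2 Qs sv m n hs hq).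
exact: part3.
Qed.
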